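(* Let $\mathcal{H}_A,\mathcal{H}_B,\mathcal{H}_C$ be finite-dimensional Hilbert spaces. For any strictly positive definite density matrix $\rho_{AB}$ on $\mathcal{H}_A\otimes\mathcal{H}_B$ and any strictly positive definite density matrix $\sigma_{BC}$ on $\mathcal{H}_B\otimes\mathcal{H}_C$, $$\rho_A^{-1}\otimes \sigma_{BC} \;\leq\; \rho_{AB}^{-1}\otimes \sigma_C$$ as operators on $\mathcal{H}_A\otimes\mathcal{H}_B\otimes\mathcal{H}_C$.
   Context: A density matrix is a positive semidefinite operator of trace one. Marginals are partial traces: $\rho_A=\mathrm{Tr}_B\,\rho_{AB}$, $\sigma_C=\mathrm{Tr}_B\,\sigma_{BC}$. The tensor factors are ordered as $\mathcal{H}_A\otimes\mathcal{H}_B\otimes\mathcal{H}_C$ (so $\rho_A^{-1}\otimes\sigma_{BC}$ acts as $\rho_A^{-1}$ on $A$ and $\sigma_{BC}$ on $BC$, and $\rho_{AB}^{-1}\otimes\sigma_C$ acts as $\rho_{AB}^{-1}$ on $AB$ and $\sigma_C$ on $C$). For Hermitian operators, $X\leq Y$ means $Y-X$ is positive semidefinite. *)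

(* Defs.v *)
From HB Require Import structures.
From mathcomp Require Import all_boot all_order all_algebra.
From mathcomp Require Import mxtens.
Set Implicit Arguments. Unset Strict Implicit. Unset Printing Implicit Defensive.
Import Order.TTheory GRing.Theory Num.Theory.
Local Open Scope ring_scope.

(* Finite-dimensional Hilbert spaces C^n; operators are n x n matrices over a
   numeric closed field C (instantiated with the complex numbers in the
   statement).  Tensor products use the Kronecker product [tensmx] ( *t ) of
   mathcomp-real-closed, whose index (i,j) on 'I_(m*n) is i*n+j. *)

Section QDefs.
Variable C : numClosedFieldType.

Definition adjmx {m n} (A : 'M[C]_(m, n)) : 'M[C]_(n, m) := (map_mx Num.conj A)^T.

Definition psdmx {n} (X : 'M[C]_n) : Prop :=
  forall v : 'cV[C]_n, 0 <= (adjmx v *m X *m v) 0 0.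

Definition pdmx {n} (X : 'M[C]_n) : Prop :=
  forall v : 'cV[C]_n, v != 0 -> 0 < (adjmx v *m X *m v) 0 0.

Definition density {n} (X : 'M[C]_n) : Prop := psdmx X /\ \tr X = 1.

Definition loewner_le {n} (X Y : 'M[C]_n) : Prop := psdmx (Y - X).

Definition ptrace2 {m n} (X : 'M[C]_(m * n)) : 'M[C]_m :=
  \matrix_(i, j) \sum_(k < n) X (mxtens_index (i, k)) (mxtens_index (j, k)).

Definition ptrace1 {m n} (X : 'M[C]_(m * n)) : 'M[C]_n :=
  \matrix_(i, j) \sum_(k < m) X (mxtens_index (k, i)) (mxtens_index (k, j)).

End QDefs.

(* Main.v *)
Require Import Defs.
From HB Require Import structures.
From mathcomp Require Import all_boot all_order all_algebra.
From mathcomp Require Import mxtens complex.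
From mathcomp Require Import reals.
From mathcomp Require Import ring.
Import Order.TTheory GRing.Theory Num.Theory.
Local Open Scope ring_scope.

Set Implicit Arguments. Unset Strict Implicit. Unset Printing Implicit Defensive.

Section Basics.
Variable C : numClosedFieldType.
Local Notation adj := (@adjmx C _ _).

Lemma adjmxE m n (A : 'M[C]_(m,n)) i j : adj A i j = (A j i)^*.
Proof. by rewrite !mxE. Qed.

Lemma adjmxK m n (A : 'M[C]_(m,n)) : adj (adj A) = A.
Proof. by apply/matrixP=> i j; rewrite !adjmxE conjCK. Qed.

Lemma adjmxM m n p (A : 'M[C]_(m,n)) (B : 'M[C]_(n,p)) :
  adj (A *m B) = adj B *m adj A.
Proof.
apply/matrixP=> i j; rewrite adjmxE !mxE rmorph_sum; apply: eq_bigr=> k _.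
by rewrite !adjmxE rmorphM mulrC.
Qed.

Lemma adjmxD m n (A B : 'M[C]_(m,n)) : adj (A + B) = adj A + adj B.
Proof. by apply/matrixP=> i j; rewrite !mxE rmorphD. Qed.

Lemma adjmxN m n (A : 'M[C]_(m,n)) : adj (- A) = - adj A.
Proof. by apply/matrixP=> i j; rewrite !mxE rmorphN. Qed.

Lemma adjmxB m n (A B : 'M[C]_(m,n)) : adj (A - B) = adj A - adj B.
Proof. by rewrite adjmxD adjmxN. Qed.

Lemma adjmxZ m n k (A : 'M[C]_(m,n)) : adj (k *: A) = k^* *: adj A.
Proof. by apply/matrixP=> i j; rewrite !mxE rmorphM. Qed.

Lemma adjmx_sum m n I (r : seq I) (P : pred I) (F : I -> 'M[C]_(m,n)) :
  adj (\sum_(i <- r | P i) F i) = \sum_(i <- r | P i) adj (F i).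
Proof.
apply/matrixP=> i j; rewrite adjmxE !summxE rmorph_sum.
by apply: eq_bigr=> k _; rewrite adjmxE.
Qed.

Lemma adjmx0 m n : adj (0 : 'M[C]_(m,n)) = 0.
Proof. by apply/matrixP=> i j; rewrite !mxE conjC0. Qed.

Lemma adjmx1 n : adj (1%:M : 'M[C]_n) = 1%:M.
Proof. by apply/matrixP=> i j; rewrite !mxE eq_sym rmorph_nat. Qed.

Lemma adjmx_scalar n k : adj (k%:M : 'M[C]_n) = k^*%:M.
Proof.
by apply/matrixP=> i j; rewrite !mxE rmorphMn eq_sym.
Qed.

Lemma adjmx_delta n (i : 'I_n) : adj (delta_mx i 0 : 'cV[C]_n) = delta_mx 0 i.
Proof. by apply/matrixP=> x y; rewrite !mxE rmorph_nat andbC. Qed.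

Lemma adjmx_inj m n : injective (@adjmx C m n).
Proof. by move=> A B h; rewrite -[A]adjmxK -[B]adjmxK h. Qed.

Lemma adjmx_eq0 m n (A : 'M[C]_(m,n)) : (adj A == 0) = (A == 0).
Proof.
apply/eqP/eqP=> [h|->]; last exact: adjmx0.
by apply: (@adjmx_inj m n); rewrite h adjmx0.
Qed.

Lemma delta_qf n (X : 'M[C]_n) i j :
  ((delta_mx 0 i : 'rV[C]_n) *m X *m (delta_mx j 0 : 'cV[C]_n)) 0 0 = X i j.
Proof. by rewrite -rowE -colE !mxE. Qed.

Lemma delta_qfM n (X : 'M[C]_n) i j :
  ((delta_mx 0 i : 'rV[C]_n) *m X *m (delta_mx j 0 : 'cV[C]_n)) = (X i j)%:M.
Proof. by apply/matrixP=> x y; rewrite (ord1 x) (ord1 y) delta_qf mxE. Qed.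

Definition qf n (X : 'M[C]_n) (v : 'cV[C]_n) := (adj v *m X *m v) 0 0.

Lemma psd_herm n (X : 'M[C]_n) : psdmx X -> adj X = X.
Proof.
move=> hX; apply/matrixP=> i j; rewrite adjmxE.
pose e k := (delta_mx k 0 : 'cV[C]_n).
have q2 : forall l : C, (adjmx (e i + l *: e j) *m X
      *m (e i + l *: e j)) 0 0 =
    X i i + l * X i j + l^* * X j i + l^* * l * X j j.
  move=> l; rewrite /e adjmxD adjmxZ !adjmx_delta.
  rewrite !(mulmxDl, mulmxDr) -!scalemxAl -!scalemxAr !delta_qfM !mxE /=; ring.
have hr : forall l : C, (X i i + l * X i j + l^* * X j i + l^* * l * X j j)^* =
   X i i + l * X i j + l^* * X j i + l^* * l * X j j.
  by move=> l; rewrite -q2; apply: geC0_conj; apply: hX.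
have hjj : (X j j)^* = X j j.
  by have := geC0_conj (hX (delta_mx j 0)); rewrite adjmx_delta delta_qf.
have hii' : (X i i)^* = X i i.
  by have := geC0_conj (hX (delta_mx i 0)); rewrite adjmx_delta delta_qf.
have h1 := hr 1; have h2 := hr 'i.
rewrite /= !rmorphD !rmorphM ?conjCK in h1 h2. simpl in h1, h2.
rewrite ?conjCK conjC1 conjCi hii' hjj in h1 h2.
have ii : 'i * 'i + 1 = 0 :> C by rewrite -expr2 sqrCi addNr.
move/eqP: h1; rewrite -subr_eq0 => /eqP h1.
move/eqP: h2; rewrite -subr_eq0 => /eqP h2.
match type of h1 with ?A = 0 => match type of h2 with ?B = 0 =>
  have key : ((X j i)^* - X i j) * 2 = A + (-'i) * B
     - ('i * 'i + 1) * ((X i j)^* - (X j i)^* + X i j - X j i) by ring end end.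
rewrite h1 h2 ii !(mulr0, mul0r, subr0, addr0) in key.
move/eqP: key; rewrite mulf_eq0 pnatr_eq0 orbF subr_eq0 => /eqP //.
Qed.

Lemma qf0 n (X : 'M[C]_n) : (adj (0 : 'cV[C]_n) *m X *m (0 : 'cV[C]_n)) 0 0 = 0.
Proof. by rewrite mulmx0 mxE. Qed.

Lemma pd_psd n (X : 'M[C]_n) : pdmx X -> psdmx X.
Proof.
move=> hX v; case: (eqVneq v 0) => [->|v0]; first by rewrite qf0.
exact: ltW (hX v v0).
Qed.

Lemma pd_unit n (X : 'M[C]_n) : pdmx X -> X \in unitmx.
Proof.
move=> hX; rewrite unitmxE unitfE; apply/negP => /det0P [v v0 hv].
have := hX (adj v); rewrite adjmx_eq0 => /(_ v0).
by rewrite adjmxK hv mul0mx mxE ltxx.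
Qed.

Lemma adjmx_inv n (X : 'M[C]_n) : X \in unitmx -> adj X = X ->
  adj (invmx X) = invmx X.
Proof.
move=> uX hX.
have h : adj (invmx X) *m X = 1%:M.
  by rewrite -{2}hX -adjmxM mulmxV // adjmx1.
by rewrite -[adj _]mulmx1 -(mulmxV uX) mulmxA h mul1mx.
Qed.

Lemma adjmx_col m1 m2 n (A : 'M[C]_(m1, n)) (B : 'M[C]_(m2, n)) :
  adj (col_mx A B) = row_mx (adj A) (adj B).
Proof. by rewrite /adjmx map_col_mx tr_col_mx. Qed.

Lemma adjmx_row m n1 n2 (A : 'M[C]_(m, n1)) (B : 'M[C]_(m, n2)) :
  adj (row_mx A B) = col_mx (adj A) (adj B).
Proof. by rewrite /adjmx map_row_mx tr_row_mx. Qed.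

Lemma adjmx_block m1 m2 n1 n2 (Aul : 'M[C]_(m1, n1)) (Aur : 'M[C]_(m1, n2))
  (Adl : 'M[C]_(m2, n1)) (Adr : 'M[C]_(m2, n2)) :
  adj (block_mx Aul Aur Adl Adr) = block_mx (adj Aul) (adj Adl) (adj Aur) (adj Adr).
Proof. by rewrite /adjmx map_block_mx tr_block_mx. Qed.

Lemma qf_block n (a : 'M[C]_1) (c : 'M[C]_(1, n)) (b : 'M[C]_(n, 1)) (D : 'M[C]_n)
  (u : 'cV[C]_1) (v : 'cV[C]_n) :
  adj (col_mx u v) *m block_mx a c b D *m col_mx u v =
  adj u *m a *m u + adj u *m c *m v + (adj v *m b *m u + adj v *m D *m v).
Proof.
rewrite adjmx_col mul_row_block mul_row_col !mulmxDl.
by rewrite addrACA.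
Qed.


Lemma pd_decomp n (X : 'M[C]_n) : pdmx X -> adj X = X ->
  exists W : 'M[C]_n, X = W *m adj W.
Proof.
elim: n X => [|n IH] X hX hH.
  by exists 0; apply/matrixP=> [[]].
pose Y : 'M[C]_(1 + n) := X.
set a := ulsubmx Y; set c := ursubmx Y; set b := dlsubmx Y; set D := drsubmx Y.
have eX : X = block_mx a c b D by rewrite submxK.
have hH' : block_mx (adj a) (adj b) (adj c) (adj D) = block_mx a c b D.
  by rewrite -adjmx_block -eX.
case/eq_block_mx: hH' => ha hbc hcb hD.
pose al := a 0 0.
have ea : a = al%:M by apply/mx11_scalar.
have qfX : forall (u : 'cV[C]_1) (v : 'cV[C]_n), col_mx u v != 0 ->
   0 < (adj u *m a *m u + adj u *m c *m v + (adj v *m b *m u + adj v *m D *m v)) 0 0.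
  by move=> u v nz; rewrite -qf_block -eX; apply: hX.
have al_gt0 : 0 < al.
  have := qfX 1%:M 0.
  rewrite col_mx_eq0 adjmx1 adjmx0 !(mulmx0, mul0mx, mulmx1, mul1mx, addr0) /al.
  apply; apply/nandP; left; apply/eqP=> /matrixP /(_ 0 0); rewrite !mxE /=.
  by move/eqP; rewrite oner_eq0.
have al0 : al != 0 by rewrite gt_eqF.
have cal : al^* = al by apply: geC0_conj; apply: ltW.
have cali : al^-1^* = al^-1 by apply: geC0_conj; rewrite invr_ge0 ltW.
set S := D - al^-1 *: (b *m c).
have hS : adj S = S by rewrite adjmxB adjmxZ adjmxM hD hbc hcb cali.
have pS : pdmx S.
  move=> v v0.
  have := qfX (- al^-1 *: (c *m v)) v.
  rewrite col_mx_eq0 (negbTE v0) andbF => /(_ isT).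
  rewrite adjmxZ adjmxM hcb rmorphN /= cali ea.
  rewrite /S mulmxBr mulmxBl.
  rewrite ?(mul_mx_scalar, =^~scalemxAl, =^~scalemxAr, scalerA, mulmxA).
  rewrite !mxE.
  move/lt_le_trans; apply; rewrite le_eqVlt; apply/orP; left; apply/eqP.
  by field; exact: al0.
have [W' eW'] := IH S pS hS.
pose sa := sqrtC al.
have sa0 : sa != 0 by rewrite sqrtC_eq0.
have csa : sa^* = sa by apply: geC0_conj; rewrite sqrtC_ge0 ltW.
have csai : sa^-1^* = sa^-1 by rewrite fmorphV /= csa.
have sa2 : sa * sa = al by rewrite -expr2 sqrtCK.
suff [W hW] : exists W : 'M[C]_(1 + n), X = W *m adj W by exists W.
exists (row_mx (col_mx sa%:M (sa^-1 *: b)) (col_mx 0 W')).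
rewrite adjmx_row !adjmx_col mul_row_col !mul_col_row add_block_mx eX.
rewrite adjmx_scalar adjmxZ csa csai hbc !adjmx0 !(mulmx0, mul0mx, addr0, add0r).
rewrite -eW' /S ea.
f_equal.
- by rewrite -scalar_mxM sa2.
- by rewrite mul_scalar_mx scalerA mulfV // scale1r.
- by rewrite mul_mx_scalar scalerA mulfV // scale1r.
- by rewrite -scalemxAl -scalemxAr scalerA -invfM sa2 addrC subrK.
Qed.


Lemma key_identity p q (I : finType) (T : I -> 'M[C]_(p,q)) (rho P : 'M[C]_q)
  (R : 'M[C]_p) (y : I -> 'cV[C]_q) :
  P *m rho = 1%:M -> rho *m P = 1%:M -> adj rho = rho -> adj R = R ->
  R *m (\sum_i T i *m rho *m adj (T i)) = 1%:M ->
  let x := \sum_i T i *m y i in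
  let z i := rho *m adj (T i) *m (R *m x) in
  \sum_i adj (y i - z i) *m P *m (y i - z i) =
  \sum_i adj (y i) *m P *m y i - adj x *m R *m x.
Proof.
move=> Pr rP hr hR hRA x z; set s := R *m x.
have h1 i : adj (y i) *m P *m z i = adj (T i *m y i) *m s.
  by rewrite /z !mulmxA -(mulmxA _ P) Pr mulmx1 adjmxM.
have h2 i : adj (z i) *m P *m y i = adj s *m (T i *m y i).
  by rewrite /z !adjmxM adjmxK hr !mulmxA -(mulmxA _ rho) rP mulmx1.
have h3 i : adj (z i) *m P *m z i = adj s *m (T i *m rho *m adj (T i)) *m s.
  rewrite /z !adjmxM adjmxK hr !mulmxA -(mulmxA _ rho P) rP mulmx1.
  by rewrite -!mulmxA.
have e i : adj (y i - z i) *m P *m (y i - z i) =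
    adj (y i) *m P *m y i - adj (T i *m y i) *m s -
    (adj s *m (T i *m y i) - adj s *m (T i *m rho *m adj (T i)) *m s).
  by rewrite adjmxB !mulmxBl !mulmxBr h1 h2 h3.
rewrite (eq_bigr _ (fun i _ => e i)) !sumrB.
rewrite -!mulmx_sumr -!mulmx_suml -adjmx_sum -/x -mulmx_sumr.
have E1 : adj x *m s = adj x *m R *m x by rewrite mulmxA.
have E2 : adj s *m x = adj x *m R *m x by rewrite /s adjmxM hR.
have E3 : adj s *m (\sum_i T i *m rho *m adj (T i)) *m s = adj x *m R *m x.
  by rewrite /s adjmxM hR -!mulmxA (mulmxA R) hRA mul1mx.
by rewrite E1 E2 E3 subrr subr0.
Qed.


Lemma sum_delta q (k : 'I_q) (F : 'I_q -> C) :
  \sum_m ((m == k)%:R * F m) = F k.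
Proof.
rewrite (bigD1 k) //= eqxx mul1r big1 ?addr0 // => m /negbTE ->.
by rewrite mul0r.
Qed.

Definition Ksel q p (f : 'I_p -> 'I_q) (g : 'I_p -> C) : 'M[C]_(q, p) :=
  \matrix_(m, i) ((m == f i)%:R * g i).

Lemma Ksel_mulX q p r (f : 'I_p -> 'I_q) g (X : 'M[C]_(q, r)) i j :
  (adj (Ksel f g) *m X) i j = (g i)^* * X (f i) j.
Proof.
rewrite mxE (eq_bigr (fun m => (m == f i)%:R * ((g i)^* * X m j))).
  by rewrite sum_delta.
by move=> m _; rewrite adjmxE mxE rmorphM /= conjC_nat mulrA.
Qed.

Lemma mulX_Ksel q p r (f : 'I_p -> 'I_q) g (X : 'M[C]_(r, q)) i j :
  (X *m Ksel f g) i j = X i (f j) * g j.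
Proof.
rewrite mxE (eq_bigr (fun m => (m == f j)%:R * (X i m * g j))).
  by rewrite sum_delta.
by move=> m _; rewrite mxE mulrCA mulrA.
Qed.

Lemma Ksel_qf q p (f : 'I_p -> 'I_q) g (X : 'M[C]_q) i j :
  (adj (Ksel f g) *m X *m Ksel f g) i j = (g i)^* * X (f i) (f j) * g j.
Proof. by rewrite mulX_Ksel Ksel_mulX. Qed.

Lemma qf_conj q p (K : 'M[C]_(q, p)) (X : 'M[C]_q) (v : 'cV[C]_p) :
  adj v *m (adj K *m X *m K) *m v = adj (K *m v) *m X *m (K *m v).
Proof. by rewrite adjmxM !mulmxA. Qed.

Lemma ix_eq m n (i i' : 'I_m) (j j' : 'I_n) :
  (mxtens_index (i, j) == mxtens_index (i', j')) = (i == i') && (j == j').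
Proof. by rewrite (can_eq (@mxtens_indexK m n)) xpair_eqE. Qed.

Lemma cast_ix a b c (i : 'I_a) (j : 'I_b) (k : 'I_c) :
  cast_ord (esym (mulnA a b c)) (mxtens_index (mxtens_index (i, j), k)) =
  mxtens_index (i, mxtens_index (j, k)).
Proof. by apply: val_inj => /=; rewrite mulnDl -mulnA addnA. Qed.


Local Notation ix := mxtens_index.
Local Notation unix := mxtens_unindex.

Theorem main_gen (a b c : nat) (rho : 'M[C]_(a * b)) (sigma : 'M[C]_(b * c)) :
  density rho -> pdmx rho -> density sigma -> pdmx sigma ->
  loewner_le
    (castmx (mulnA a b c, mulnA a b c) (invmx (ptrace2 rho) *t sigma))
    (invmx rho *t ptrace1 sigma).
Proof.
move=> [rpsd rtr] rpd [spsd _] spd.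
have hr := psd_herm rpsd; have ur := pd_unit rpd.
have b_gt0 : (0 < b)%N.
  have : (0 < a * b)%N.
    rewrite lt0n; apply/negP=> /eqP e; move: rtr; rewrite /mxtrace big1.
      by move/eqP; rewrite eq_sym oner_eq0.
    by move=> [i hi] _; exfalso; move: hi; rewrite e.
  by rewrite muln_gt0 => /andP [].
pose T (j : 'I_b) : 'M[C]_(a, a * b) :=
  adj (Ksel (fun i : 'I_a => ix (i, j)) (fun _ => 1)).
have E1 : ptrace2 rho = \sum_j T j *m rho *m adj (T j).
  apply/matrixP=> i i'; rewrite mxE summxE; apply: eq_bigr=> j _.
  by rewrite /T adjmxK Ksel_qf conjC1 mul1r mulr1.
set rA := ptrace2 rho in E1 *.
have hA : adj rA = rA.
  rewrite E1 adjmx_sum; apply: eq_bigr=> j _.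
  by rewrite !adjmxM adjmxK hr mulmxA.
have pA : pdmx rA.
  move=> v v0; rewrite E1 mulmx_sumr mulmx_suml summxE.
  have [k vk] : exists k, v k 0 != 0.
    apply/existsP; apply: contraR v0; rewrite negb_exists => /forallP h.
    by apply/eqP/matrixP=> k l; rewrite (ord1 l) mxE; apply/eqP/negPn/h.
  pose j0 : 'I_b := Ordinal b_gt0.
  have ge j : 0 <= (adj v *m (T j *m rho *m adj (T j)) *m v) 0 0.
    by rewrite /T adjmxK qf_conj; apply: pd_psd.
  rewrite (bigD1 j0) //=.
  have h0 : 0 < (adj v *m (T j0 *m rho *m adj (T j0)) *m v) 0 0.
    rewrite /T adjmxK qf_conj; apply: rpd.
    apply/negP=> /eqP /matrixP /(_ (ix (k, j0)) 0); rewrite !mxE.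
    rewrite (eq_bigr (fun i => (i == k)%:R * v i 0)) ?sum_delta.
      by move/eqP; rewrite (negbTE vk).
    by move=> i _; rewrite mxE ix_eq eqxx andbT eq_sym mulr1.
  apply: (lt_le_trans h0); rewrite lerDl; apply: sumr_ge0 => j _; exact: ge.
have uA := pd_unit pA.
set R := invmx rA.
have hR : adj R = R := adjmx_inv uA hA.
have RA : R *m rA = 1%:M := mulVmx uA.
set P := invmx rho.
have Pr : P *m rho = 1%:M := mulVmx ur.
have rP : rho *m P = 1%:M := mulmxV ur.
have hP : adj P = P := adjmx_inv ur hr.
have Ppsd : psdmx P.
  move=> u; have -> : adj u *m P *m u = adj (P *m u) *m rho *m (P *m u).
    by rewrite adjmxM hP !mulmxA -(mulmxA _ P rho) Pr mulmx1.
  exact: rpsd.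
have hs := psd_herm spsd.
have [W eW] := pd_decomp spd hs.
pose fm (i : 'I_(a * b * c)) := (unix i).1.
pose fa (i : 'I_(a * b * c)) := (unix (unix i).1).1.
pose gb (j : 'I_(b * c)) (k : 'I_b) (i : 'I_(a * b * c)) := (W (ix (k, (unix i).2)) j)^*.
pose ga (j : 'I_(b * c)) (i : 'I_(a * b * c)) :=
  (W (ix ((unix (unix i).1).2, (unix i).2)) j)^*.
pose Kb j k := Ksel fm (gb j k).
pose Ka j := Ksel fa (ga j).
have SK j : \sum_k T k *m Kb j k = Ka j.
  apply/matrixP => al i; rewrite summxE.
  case: (mxtens_indexP i) => m g; case: (mxtens_indexP m) => al0 be0.
  rewrite mxE /fa /ga !mxtens_indexK /=.
  rewrite (eq_bigr (fun k => (k == be0)%:R * ((al == al0)%:R * (W (ix (k, g)) j)^*))).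
    by rewrite sum_delta.
  move=> k _; rewrite /T Ksel_mulX conjC1 mul1r mxE /fm /gb !mxtens_indexK /= ix_eq.
  by rewrite -mulnb natrM mulrCA mulrA.
have EL : castmx (mulnA a b c, mulnA a b c) (R *t sigma) =
    \sum_j adj (Ka j) *m R *m Ka j.
  apply/matrixP=> i i'; rewrite summxE castmxE /=.
  case: (mxtens_indexP i) => m g; case: (mxtens_indexP m) => al be.
  case: (mxtens_indexP i') => m' g'; case: (mxtens_indexP m') => al' be'.
  rewrite !cast_ix tensmxE eW mxE mulr_sumr; apply: eq_bigr => j _.
  rewrite Ksel_qf /fa /ga !mxtens_indexK /= adjmxE conjCK.
  by rewrite mulrCA mulrA.
have EM : P *t ptrace1 sigma = \sum_j \sum_k adj (Kb j k) *m P *m Kb j k.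
  apply/matrixP=> i i'; rewrite summxE.
  under eq_bigr => j _ do rewrite summxE.
  case: (mxtens_indexP i) => m g; case: (mxtens_indexP m) => al be.
  case: (mxtens_indexP i') => m' g'; case: (mxtens_indexP m') => al' be'.
  rewrite tensmxE mxE exchange_big mulr_sumr; apply: eq_bigr => k _.
  rewrite eW mxE mulr_sumr; apply: eq_bigr => j _.
  rewrite Ksel_qf /fm /gb !mxtens_indexK /= adjmxE conjCK.
  by rewrite mulrCA mulrA.
move=> v; rewrite EL EM.
have QM : adj v *m (\sum_j \sum_k adj (Kb j k) *m P *m Kb j k) *m v =
    \sum_j \sum_k adj (Kb j k *m v) *m P *m (Kb j k *m v).
  rewrite mulmx_sumr mulmx_suml; apply: eq_bigr => j _.
  rewrite mulmx_sumr mulmx_suml; apply: eq_bigr => k _; exact: qf_conj.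
have QL : adj v *m (\sum_j adj (Ka j) *m R *m Ka j) *m v =
    \sum_j adj (Ka j *m v) *m R *m (Ka j *m v).
  rewrite mulmx_sumr mulmx_suml; apply: eq_bigr => j _; exact: qf_conj.
rewrite mulmxBr mulmxBl QM QL -sumrB summxE; apply: sumr_ge0 => j _.
have /= E := key_identity (T := T) (fun k => Kb j k *m v) Pr rP hr hR
  (ltac:(by rewrite -E1)).
have Ex : \sum_k T k *m (Kb j k *m v) = Ka j *m v.
  by rewrite -SK mulmx_suml; apply: eq_bigr => k _; rewrite mulmxA.
rewrite Ex in E; rewrite -E summxE; apply: sumr_ge0 => k _; apply: Ppsd.
Qed.

End Basics.

Unset Implicit Arguments.
Local Open Scope complex_scope.

Theorem lemma1 (R : realType) (a b c : nat)
  (rhoAB : 'M[R[i]]_(a * b)) (sigmaBC : 'M[R[i]]_(b * c)) :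
  density rhoAB -> pdmx rhoAB ->
  density sigmaBC -> pdmx sigmaBC ->
  loewner_le
    (castmx (mulnA a b c, mulnA a b c)
       (invmx (ptrace2 rhoAB) *t sigmaBC))
    (invmx rhoAB *t ptrace1 sigmaBC).
Proof. exact: main_gen. Qed.
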